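(* Let $q\neq 2$ be a prime power with $q\equiv -1\pmod 3$, let $G=\mathrm{SU}_3(q)$, and let $\mathcal{C}=C_3^{(0,l)}$ for some $0\leq l\leq 2$. Then $K_{\mathcal{C}}$ is irreducible.
   Context: $\mathrm{SU}_3(q)$ is the group of determinant-one matrices $M\in\mathrm{GL}_3(q^2)$ with $M^*JM=J$, where $J$ has ones on the anti-diagonal and zeros elsewhere and $M^*$ is the transpose of $M$ with every entry raised to the $q$-th power. Let $\xi$ be a generator of $\mathbb{F}_{q^2}^\times$. For $0\leq l\leq 2$, $C_3^{(0,l)}$ is the $\mathrm{SU}_3(q)$-conjugacy class of $\begin{pmatrix}1&\xi^{l(q-1)}&\alpha\\0&1&-\xi^{-l(q-1)}\\0&0&1\end{pmatrix}$ where $\alpha\in\mathbb{F}_{q^2}^\times$ satisfies $\alpha+\alpha^q+1=0$. For a finite group $G$ and a subset $\mathcal{C}\subseteq G\setminus\{1\}$ closed under conjugation, the Killing form is $K_{\mathcal{C}}(a,b)=|C_G(ab)\cap\mathcal{C}|$ on the basis $\mathcal{C}$; it is irreducible if the graph with vertex set $\mathcal{C}$, in which distinct $a,b$ are adjacent iff $C_G(ab)\cap\mathcal{C}\neq\emptyset$, is connected. *)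

(* Defs.v *)
From mathcomp Require Import all_boot all_order all_algebra all_fingroup all_field.
Set Implicit Arguments. Unset Strict Implicit. Unset Printing Implicit Defensive.
Import GRing.Theory.
Local Open Scope ring_scope.

Section SU3.
Variables (F : finFieldType) (q : nat).

Definition conjtr (M : 'M[F]_3) : 'M[F]_3 := map_mx (fun x => x ^+ q) M^T.

Definition Jmx : 'M[F]_3 := \matrix_(i < 3, j < 3) (((i : nat) + j == 2)%N)%:R.

(* SU_3(q) as a set of 3x3 matrices over F = F_{q^2} *)
Definition SU3 : {set 'M[F]_3} :=
  [set M | (conjtr M *m Jmx *m M == Jmx) && (\det M == 1)].

Definition SU3_class (u : 'M[F]_3) : {set 'M[F]_3} :=
  [set invmx h *m u *m h | h in SU3].

Definition SU3_cent (x : 'M[F]_3) : {set 'M[F]_3} :=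
  [set h in SU3 | h *m x == x *m h].

Definition killing (C : {set 'M[F]_3}) (a b : 'M[F]_3) : nat :=
  #|SU3_cent (a *m b) :&: C|.

Definition killing_adj (C : {set 'M[F]_3}) : rel 'M[F]_3 :=
  fun a b => [&& a \in C, b \in C, a != b & (0 < killing C a b)%N].

Definition killing_irreducible (C : {set 'M[F]_3}) : Prop :=
  forall a b, a \in C -> b \in C -> connect (killing_adj C) a b.

Definition C3rep (x alpha : F) : 'M[F]_3 :=
  \matrix_(i < 3, j < 3)
    if i == j :> nat then 1
    else if ((i : nat) == 0%N) && ((j : nat) == 1%N) then x
    else if ((i : nat) == 0%N) && ((j : nat) == 2%N) then alpha
    else if ((i : nat) == 1%N) && ((j : nat) == 2%N) then - x^-1
    else 0.

Definition C3_0l (xi alpha : F) (l : nat) : {set 'M[F]_3} :=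
  SU3_class (C3rep (xi ^+ (l * (q - 1))) alpha).

End SU3.

(* Main.v *)
Require Import Defs.
From mathcomp Require Import all_boot all_order all_algebra all_fingroup all_field.
From mathcomp Require Import ring zify.
Set Implicit Arguments. Unset Strict Implicit. Unset Printing Implicit Defensive.
Import GRing.Theory.
Local Open Scope ring_scope.


Section Mat.
Variable R : comRingType.

Definition o0 : 'I_3 := @Ordinal 3 0 isT.
Definition o1 : 'I_3 := @Ordinal 3 1 isT.
Definition o2 : 'I_3 := @Ordinal 3 2 isT.

Definition M3 (a b c d e f g h i : R) : 'M[R]_3 :=
  \matrix_(r < 3, s < 3)
    nth 0 (nth [::] [:: [:: a; b; c]; [:: d; e; f]; [:: g; h; i]] r) s.

Lemma ord3P (P : 'I_3 -> Prop) : P o0 -> P o1 -> P o2 -> forall i, P i.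
Proof.
move=> h0 h1 h2 [[|[|[|n]]] Hn] //.
- by rewrite (_ : Ordinal Hn = o0) //; apply/val_inj.
- by rewrite (_ : Ordinal Hn = o1) //; apply/val_inj.
- by rewrite (_ : Ordinal Hn = o2) //; apply/val_inj.
Qed.

Lemma M3E (A : 'M[R]_3) :
  A = M3 (A o0 o0) (A o0 o1) (A o0 o2) (A o1 o0) (A o1 o1) (A o1 o2)
         (A o2 o0) (A o2 o1) (A o2 o2).
Proof.
by apply/matrixP; elim/ord3P => //; elim/ord3P => //; rewrite mxE.
Qed.

Lemma M3_eq a b c d e f g h i a' b' c' d' e' f' g' h' i' :
  a = a' -> b = b' -> c = c' -> d = d' -> e = e' -> f = f' -> g = g' -> h = h' -> i = i' ->
  M3 a b c d e f g h i = M3 a' b' c' d' e' f' g' h' i'.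
Proof. by move=> *; subst. Qed.

Lemma M3_00 a b c d e f g h i : M3 a b c d e f g h i o0 o0 = a. Proof. by rewrite mxE. Qed.
Lemma M3_01 a b c d e f g h i : M3 a b c d e f g h i o0 o1 = b. Proof. by rewrite mxE. Qed.
Lemma M3_02 a b c d e f g h i : M3 a b c d e f g h i o0 o2 = c. Proof. by rewrite mxE. Qed.
Lemma M3_10 a b c d e f g h i : M3 a b c d e f g h i o1 o0 = d. Proof. by rewrite mxE. Qed.
Lemma M3_11 a b c d e f g h i : M3 a b c d e f g h i o1 o1 = e. Proof. by rewrite mxE. Qed.
Lemma M3_12 a b c d e f g h i : M3 a b c d e f g h i o1 o2 = f. Proof. by rewrite mxE. Qed.
Lemma M3_20 a b c d e f g h i : M3 a b c d e f g h i o2 o0 = g. Proof. by rewrite mxE. Qed.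
Lemma M3_21 a b c d e f g h i : M3 a b c d e f g h i o2 o1 = h. Proof. by rewrite mxE. Qed.
Lemma M3_22 a b c d e f g h i : M3 a b c d e f g h i o2 o2 = i. Proof. by rewrite mxE. Qed.

Definition M3_ent := (M3_00, M3_01, M3_02, M3_10, M3_11, M3_12, M3_20, M3_21, M3_22).

Lemma sum3 (F : 'I_3 -> R) : \sum_(k < 3) F k = F o0 + F o1 + F o2.
Proof.
rewrite !big_ord_recr big_ord0 /= add0r.
by congr (_ + _ + _); congr F; apply/val_inj.
Qed.

Lemma mulM3 a b c d e f g h i a' b' c' d' e' f' g' h' i' :
  M3 a b c d e f g h i *m M3 a' b' c' d' e' f' g' h' i' =
  M3 (a*a' + b*d' + c*g') (a*b' + b*e' + c*h') (a*c' + b*f' + c*i')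
     (d*a' + e*d' + f*g') (d*b' + e*e' + f*h') (d*c' + e*f' + f*i')
     (g*a' + h*d' + i*g') (g*b' + h*e' + i*h') (g*c' + h*f' + i*i').
Proof.
apply/matrixP; elim/ord3P; elim/ord3P;
by rewrite !mxE sum3 !mxE.
Qed.

Lemma trM3 a b c d e f g h i : (M3 a b c d e f g h i)^T = M3 a d g b e h c f i.
Proof. by apply/matrixP; elim/ord3P; elim/ord3P; rewrite !mxE. Qed.

Lemma mapM3 (fn : R -> R) a b c d e f g h i :
  map_mx fn (M3 a b c d e f g h i) = M3 (fn a) (fn b) (fn c) (fn d) (fn e) (fn f) (fn g) (fn h) (fn i).
Proof. by apply/matrixP; elim/ord3P; elim/ord3P; rewrite !mxE. Qed.

Lemma oneM3 : (1%:M : 'M[R]_3) = M3 1 0 0 0 1 0 0 0 1.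
Proof. by apply/matrixP; elim/ord3P; elim/ord3P; rewrite !mxE. Qed.

Lemma detM3 a b c d e f g h i :
  \det (M3 a b c d e f g h i) = a*(e*i - f*h) - b*(d*i - f*g) + c*(d*h - e*g).
Proof.
rewrite (expand_det_row _ o0) sum3 /cofactor.
rewrite !(expand_det_row _ ord0) !big_ord_recr big_ord0 /= /cofactor.
rewrite !det_mx11 !mxE /= !big_ord0 !add0r.
rewrite !addn0 !add0n; ring.
Qed.
End Mat.



Section Frob.
Variables (F : finFieldType) (q : nat).
Hypothesis q_char : [char F].-nat q.
Hypothesis cardF : #|F| = (q ^ 2)%N.

Local Notation fr := (fun x : F => x ^+ q).

Lemma q_gt0 : (0 < q)%N.
Proof. by case: q q_char => //; rewrite /pnat. Qed.

Lemma frD (a b : F) : (a + b) ^+ q = a ^+ q + b ^+ q.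
Proof. exact: exprDn_pchar. Qed.
Lemma fr0 : (0 : F) ^+ q = 0.
Proof. by rewrite expr0n eqn0Ngt q_gt0. Qed.
Lemma frN (a : F) : (- a) ^+ q = - a ^+ q.
Proof. by apply/eqP; rewrite -addr_eq0 -frD addNr fr0. Qed.
Lemma frB (a b : F) : (a - b) ^+ q = a ^+ q - b ^+ q.
Proof. by rewrite frD frN. Qed.
Lemma frM (a b : F) : (a * b) ^+ q = a ^+ q * b ^+ q.
Proof. exact: exprMn. Qed.
Lemma fr1 : (1 : F) ^+ q = 1.
Proof. exact: expr1n. Qed.
Lemma frV (a : F) : (a ^-1) ^+ q = (a ^+ q) ^-1.
Proof. exact: exprVn. Qed.
Lemma frK (a : F) : (a ^+ q) ^+ q = a.
Proof. by rewrite -exprM (_ : (q * q = #|F|)%N) ?expf_card // cardF expnS expn1. Qed.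
Lemma frn (n : nat) : (n%:R : F) ^+ q = n%:R.
Proof. by elim: n => [|n IH]; rewrite ?fr0 // -natr1 frD IH fr1. Qed.
Lemma frX (a : F) n : (a ^+ n) ^+ q = (a ^+ q) ^+ n.
Proof. by rewrite -!exprM mulnC. Qed.
Lemma fr_eq0 (a : F) : (a ^+ q == 0) = (a == 0).
Proof. by rewrite expf_eq0 q_gt0. Qed.

Definition frE := (frD, frB, frN, frM, fr1, fr0, frV, frK, frn, frX).

Definition cTr (M : 'M[F]_3) := conjtr q M.

Lemma JmxE : Jmx F = M3 (0:F) 0 1 0 1 0 1 0 0.
Proof. by apply/matrixP; elim/ord3P; elim/ord3P; rewrite !mxE. Qed.

Lemma conjtrM3 (a b c d e f g h i : F) :
  conjtr q (M3 a b c d e f g h i) =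
  M3 (a^+q) (d^+q) (g^+q) (b^+q) (e^+q) (h^+q) (c^+q) (f^+q) (i^+q).
Proof. by rewrite /conjtr trM3 mapM3. Qed.

Lemma conjtrM (A B : 'M[F]_3) : conjtr q (A *m B) = conjtr q B *m conjtr q A.
Proof.
rewrite [A]M3E [B]M3E mulM3 !conjtrM3 mulM3.
by apply: M3_eq; rewrite !frE; ring.
Qed.

Lemma conjtrK (A : 'M[F]_3) : conjtr q (conjtr q A) = A.
Proof. by rewrite [A]M3E !conjtrM3 !frK. Qed.

Lemma conjtr1 : conjtr q (1%:M : 'M[F]_3) = 1%:M.
Proof. by rewrite oneM3 conjtrM3 fr0 fr1. Qed.

Lemma conjtrJ : conjtr q (Jmx F) = Jmx F.
Proof. by rewrite JmxE conjtrM3 fr0 fr1. Qed.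

Lemma JJ : Jmx F *m Jmx F = 1%:M.
Proof. by rewrite JmxE mulM3 oneM3; apply: M3_eq; ring. Qed.

Lemma detconjtr (A : 'M[F]_3) : \det (conjtr q A) = (\det A) ^+ q.
Proof. by rewrite [A]M3E conjtrM3 !detM3 !frE; ring. Qed.

Lemma SU3P (M : 'M[F]_3) :
  reflect (conjtr q M *m Jmx F *m M = Jmx F /\ \det M = 1) (M \in SU3 F q).
Proof. by rewrite inE; apply: (iffP andP) => -[/eqP ? /eqP ?]. Qed.

Lemma SU3_1 : 1%:M \in SU3 F q.
Proof. by apply/SU3P; rewrite conjtr1 mul1mx mulmx1 det1. Qed.

Lemma SU3_mul (A B : 'M[F]_3) : A \in SU3 F q -> B \in SU3 F q -> A *m B \in SU3 F q.
Proof.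
move=> /SU3P [hA dA] /SU3P [hB dB]; apply/SU3P; split; last by rewrite det_mulmx dA dB mulr1.
by rewrite conjtrM !mulmxA -(mulmxA _ (conjtr q A)) -(mulmxA _ _ A) hA hB.
Qed.

Lemma SU3_unit (A : 'M[F]_3) : A \in SU3 F q -> A \in unitmx.
Proof. by move=> /SU3P [_ d]; rewrite unitmxE d unitr1. Qed.

Lemma SU3_inv (A : 'M[F]_3) : A \in SU3 F q -> invmx A = Jmx F *m conjtr q A *m Jmx F.
Proof.
move=> hA; have uA := SU3_unit hA; move/SU3P: hA => [h _].
have e : (Jmx F *m conjtr q A *m Jmx F) *m A = 1%:M.
  by rewrite -!mulmxA (mulmxA (conjtr q A)) h JJ.
by rewrite -[RHS]mulmx1 -(mulmxV uA) mulmxA e mul1mx.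
Qed.

Lemma SU3_invmx (A : 'M[F]_3) : A \in SU3 F q -> invmx A \in SU3 F q.
Proof.
move=> hA; have uA := SU3_unit hA.
move/SU3P: (hA) => [h d]; apply/SU3P; split.
  have e : conjtr q (invmx A) *m Jmx F *m invmx A =
     conjtr q (A *m invmx A) *m Jmx F *m (A *m invmx A).
    by rewrite conjtrM -{1}h !mulmxA.
  by rewrite e mulmxV // conjtr1 mul1mx mulmx1.
have := det_mulmx A (invmx A); rewrite mulmxV // det1 d mul1r => <-. done.
Qed.

Variable u : 'M[F]_3.
Hypothesis uG : u \in SU3 F q.

Local Notation G := (SU3 F q).
Local Notation C := (SU3_class q u).
Local Notation adj := (killing_adj q C).

Definition cj (h a : 'M[F]_3) := invmx h *m a *m h.

Lemma invmxM (A B : 'M[F]_3) : A \in G -> B \in G -> invmx (A *m B) = invmx B *m invmx A.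
Proof.
move=> hA hB; rewrite !SU3_inv // ?SU3_mul // conjtrM.
by rewrite !mulmxA -(mulmxA _ (Jmx F) (Jmx F)) JJ mulmx1.
Qed.

Lemma cjM (g h a : 'M[F]_3) : g \in G -> h \in G -> cj (g *m h) a = cj h (cj g a).
Proof. by move=> hg hh; rewrite /cj invmxM // !mulmxA. Qed.

Lemma cj_mul (h a b : 'M[F]_3) : h \in G -> cj h (a *m b) = cj h a *m cj h b.
Proof.
move=> hh; rewrite /cj.
have -> : invmx h *m a *m h *m (invmx h *m b *m h) = invmx h *m a *m (h *m invmx h) *m b *m h.
  by rewrite !mulmxA.
by rewrite mulmxV ?SU3_unit // mulmx1 !mulmxA.
Qed.

Lemma cjK (h a : 'M[F]_3) : h \in G -> cj (invmx h) (cj h a) = a.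
Proof.
move=> hh; have uh := SU3_unit hh.
by rewrite /cj invmxK !mulmxA mulmxV // mul1mx -mulmxA mulmxV // mulmx1.
Qed.

Lemma cj_inj (h a b : 'M[F]_3) : h \in G -> cj h a = cj h b -> a = b.
Proof. by move=> hh e; rewrite -(cjK a hh) e cjK. Qed.

Lemma cj1 (a : 'M[F]_3) : cj 1%:M a = a.
Proof. by rewrite /cj invmx1 mul1mx mulmx1. Qed.

Lemma cjG (h a : 'M[F]_3) : h \in G -> a \in G -> cj h a \in G.
Proof. by move=> hh ha; rewrite /cj !SU3_mul // SU3_invmx. Qed.

Lemma inCP (a : 'M[F]_3) : reflect (exists2 h, h \in G & a = cj h u) (a \in C).
Proof. by apply: (iffP imsetP) => -[h hh ->]; exists h. Qed.

Lemma C_cj (h a : 'M[F]_3) : h \in G -> a \in C -> cj h a \in C.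
Proof.
move=> hh /inCP [g hg ->]; apply/inCP; exists (g *m h); first exact: SU3_mul.
by rewrite cjM.
Qed.

Lemma u_in_C : u \in C.
Proof. by apply/inCP; exists 1%:M; [exact: SU3_1 | rewrite cj1]. Qed.

Lemma C_G (a : 'M[F]_3) : a \in C -> a \in G.
Proof. by move=> /inCP [h hh ->]; exact: cjG. Qed.

Lemma killing_gt0P (a b : 'M[F]_3) :
  reflect (exists2 c, c \in C & [/\ c \in G & c *m (a *m b) = (a *m b) *m c])
          (0 < killing q C a b)%N.
Proof.
rewrite /killing; apply: (iffP card_gt0P).
  move=> [c]; rewrite in_setI => /andP [hc cC]; move: hc.
  by rewrite /SU3_cent in_set => /andP [cG /eqP e]; exists c.
by move=> [c cC [cG e]]; exists c; rewrite in_setI /SU3_cent in_set cG cC e eqxx.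
Qed.

Lemma adj_cj (h a b : 'M[F]_3) : h \in G -> adj a b -> adj (cj h a) (cj h b).
Proof.
move=> hh /and4P [aC bC ab /killing_gt0P [c cC [cG e]]].
apply/and4P; split; try exact: C_cj.
  by apply: contra ab => /eqP /cj_inj -> //.
apply/killing_gt0P; exists (cj h c); first exact: C_cj.
by split; [exact: cjG | rewrite -!cj_mul // e].
Qed.

Lemma connect_cj (h a b : 'M[F]_3) : h \in G -> connect adj a b -> connect adj (cj h a) (cj h b).
Proof.
move=> hh /connectP [p pth ->]; elim: p a pth => [|c p IH] a /=; first by rewrite connect0.
move=> /andP [e pth]; apply: connect_trans (IH _ pth).
by apply: connect1; exact: adj_cj.
Qed.

Lemma adj_sym : symmetric adj.
Proof.
have H a b : adj a b -> adj b a.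
  move=> /and4P [aC bC ab /killing_gt0P [c cC [cG e]]].
  apply/and4P; split => //; first by rewrite eq_sym.
  have aG := C_G aC; have bG := C_G bC.
  apply/killing_gt0P; exists (cj a c); first by apply: C_cj.
  split; first by apply: cjG.
  have -> : b *m a = cj a (a *m b).
    by rewrite /cj !mulmxA mulVmx ?SU3_unit // mul1mx.
  by rewrite -cj_mul // e cj_mul.
by move=> a b; apply/idP/idP => /H.
Qed.

Definition PS (g : 'M[F]_3) := connect adj u (cj g u).

Lemma PS1 : PS 1%:M.
Proof. by rewrite /PS cj1 connect0. Qed.

Lemma PSM (g h : 'M[F]_3) : g \in G -> h \in G -> PS g -> PS h -> PS (g *m h).
Proof.
move=> hg hh pg ph; rewrite /PS cjM //.
apply: connect_trans ph _; exact: connect_cj.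
Qed.

Lemma PSV (g : 'M[F]_3) : g \in G -> PS g -> PS (invmx g).
Proof.
move=> hg pg; rewrite /PS.
have := connect_cj (SU3_invmx hg) pg; rewrite cjK // => e.
by rewrite (sym_connect_sym adj_sym).
Qed.

Lemma PS_all_irr : (forall g, g \in G -> PS g) -> killing_irreducible q C.
Proof.
move=> H a b /inCP [g hg ->] /inCP [h hh ->].
have hgi := SU3_invmx hg.
have := connect_cj hg (H _ (SU3_mul hh hgi)).
by rewrite -cjM ?SU3_mul // -mulmxA mulVmx ?SU3_unit // mulmx1.
Qed.


Variables (x alpha w0 : F).
Hypothesis hx : x != 0.
Hypothesis frx : x ^+ q = x^-1.
Hypothesis fra : alpha ^+ q = - 1 - alpha.
Hypothesis hw : w0 ^+ 2 = - 1 - w0.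
Hypothesis frw : w0 ^+ q = w0 ^+ 2.
Hypothesis h3 : (3%:R : F) != 0.

Definition Ut (a b c : F) := M3 1 a b 0 1 c 0 0 1.
Hypothesis uE : u = Ut x alpha (- x^-1).

Lemma Ut_G (a b : F) : b + b ^+ q + a * a ^+ q = 0 -> Ut a b (- a ^+ q) \in G.
Proof.
move=> e; apply/SU3P; split; last by rewrite /Ut detM3; ring.
rewrite /Ut conjtrM3 JmxE !mulM3 !frE; apply: M3_eq; try ring.
all: rewrite -[RHS]e; ring.
Qed.

Lemma invmx_eq (A X : 'M[F]_3) : A \in unitmx -> X *m A = 1%:M -> invmx A = X.
Proof. by move=> uA e; rewrite -[RHS]mulmx1 -(mulmxV uA) mulmxA e mul1mx. Qed.

Lemma Ut_unit a b c : Ut a b c \in unitmx.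
Proof.
by rewrite unitmxE /Ut detM3; apply/unitrP; exists 1; split; ring.
Qed.

Lemma Ut_inv a b c : invmx (Ut a b c) = Ut (- a) (a * c - b) (- c).
Proof.
apply: invmx_eq; first exact: Ut_unit.
by rewrite /Ut mulM3 oneM3; apply: M3_eq; ring.
Qed.

Lemma adj_comm (a b : 'M[F]_3) : a \in C -> b \in C -> a != b -> a *m b = b *m a -> adj a b.
Proof.
move=> aC bC ab e; apply/and4P; split => //.
apply/killing_gt0P; exists a => //; split; first exact: C_G.
by rewrite -mulmxA -e.
Qed.

Lemma connect_comm (b : 'M[F]_3) : b \in C -> u *m b = b *m u -> connect adj u b.
Proof.
move=> bC e; have [->|ub] := eqVneq u b; first exact: connect0.
by apply: connect1; apply: adj_comm => //; exact: u_in_C.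
Qed.

Lemma PS_Ut a b c : Ut a b c \in G -> PS (Ut a b c).
Proof.
move=> vG; rewrite /PS; apply: connect_comm; first by apply: C_cj => //; exact: u_in_C.
rewrite /cj Ut_inv uE /Ut !mulM3; apply: M3_eq; ring.
Qed.

Lemma H90 (beta : F) : beta ^+ q = - 1 - beta ->
  exists2 v, v \in G & [/\ PS v, PS (invmx v) & cj v u = Ut x beta (- x^-1)].
Proof.
move=> frb.
pose mu := - (beta - alpha) * w0 ^+ 2.
have frmu : mu ^+ q = (beta - alpha) * w0.
  rewrite /mu !frE frb fra frw; ring: hw.
have muE : mu = - (beta - alpha) * w0 ^+ 2 by [].
clearbody mu.
pose d := mu * x; pose f := w0 ^+ 2 * mu * mu ^+ q.
have vG : Ut d f (- d ^+ q) \in G.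
  apply: Ut_G; rewrite /f /d !frE frmu frw frx; field: hw; rewrite ?hx ?h3 ?andbT //.
exists (Ut d f (- d ^+ q)); first exact: vG.
split.
- exact: PS_Ut.
- rewrite Ut_inv; apply: PS_Ut; rewrite -Ut_inv; exact: SU3_invmx.
- rewrite /cj Ut_inv uE /Ut !mulM3 /d !frE frmu frx; apply: M3_eq; try by field: hw; rewrite ?hx ?h3 ?andbT //.
  rewrite /f muE; field: hw; rewrite ?hx ?h3 ?andbT //.
Qed.

Definition w3 : 'M[F]_3 := M3 0 0 1 0 (-1) 0 1 0 0.

Lemma w3w3 : w3 *m w3 = 1%:M.
Proof. by rewrite /w3 mulM3 oneM3; apply: M3_eq; ring. Qed.

Lemma w3_G : w3 \in G.
Proof.
apply/SU3P; split; last by rewrite /w3 detM3; ring.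
rewrite /w3 conjtrM3 JmxE !mulM3 !frE; apply: M3_eq; ring.
Qed.

Lemma w3_inv : invmx w3 = w3.
Proof. by apply: invmx_eq; [exact: SU3_unit w3_G | exact: w3w3]. Qed.

Definition br : 'M[F]_3 :=
  M3 (-3%:R) (- (x * (1 - w0))) (- w0 ^+ 2)
     0 1 (- ((1 - w0 ^+ 2) / (3%:R * x)))
     0 0 (- 3%:R^-1).

Lemma br_G : br \in G.
Proof.
apply/SU3P; split; last by rewrite /br detM3; field; rewrite hx h3.
rewrite /br conjtrM3 JmxE !mulM3 !frE frx frw; apply: M3_eq; field: hw; rewrite ?hx ?h3 ?andbT //.
Qed.

Definition yy : 'M[F]_3 :=
  M3 (3%:R - 2%:R * w0) (- (w0 * x)) (w0 ^+ 2)
     (3%:R * (w0 ^+ 2 - 1) / x) w0 (w0 / x)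
     (3%:R * (w0 ^+ 2 - 1)) 0 w0.

Lemma crux : PS (w3 *m br).
Proof.
have fb1 : (w0 ^+ 2) ^+ q = - 1 - w0 ^+ 2 by rewrite frX frw; ring: hw.
have fb2 : (- (2%:R + w0) / 3%:R) ^+ q = - 1 - (- (2%:R + w0) / 3%:R).
  by rewrite !frE frw; field: hw.
have [v1 v1G [pv1 _ e1]] := H90 fb1.
have [v2 v2G [pv2 pv2i e2]] := H90 fb2.
have gG : w3 *m br \in G by apply: SU3_mul; [exact: w3_G | exact: br_G].
have ey : cj (w3 *m br) (Ut x (- (2%:R + w0) / 3%:R) (- x^-1)) = yy.
  rewrite /cj -mulmxA.
  have -> : Ut x (- (2%:R + w0) / 3%:R) (- x^-1) *m (w3 *m br) = (w3 *m br) *m yy.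
    by rewrite /Ut /w3 /br /yy !mulM3; apply: M3_eq; field: hw; rewrite ?hx ?h3 ?andbT //.
  by rewrite mulmxA mulVmx ?SU3_unit // mul1mx.
have yC : yy \in C.
  rewrite -ey -e2 -cjM //; apply: C_cj; first exact: SU3_mul.
  exact: u_in_C.
have u1C : Ut x (w0 ^+ 2) (- x^-1) \in C by rewrite -e1; apply: C_cj => //; exact: u_in_C.
have cu1 : connect adj u (Ut x (w0 ^+ 2) (- x^-1)) by rewrite -e1.
have ad : adj (Ut x (w0 ^+ 2) (- x^-1)) yy.
  apply/and4P; split => //.
    have ne : (3%:R * (w0 ^+ 2 - 1) : F) != 0.
      rewrite mulf_eq0 negb_or h3 /= subr_eq0.
      apply/negP => /eqP e.
      have h : (1 : F) = - 1 - w0 by rewrite -hw e.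
      have ew : w0 = - 2%:R.
        have -> : w0 = - 1 - (- 1 - w0) by ring.
        by rewrite -h; ring.
      have : (3%:R : F) = w0 ^+ 2 - 1 by rewrite ew; ring.
      by rewrite e subrr; apply/eqP.
    apply/negP => /eqP /(congr1 (fun M : 'M[F]_3 => M o2 o0)); rewrite /Ut /yy !M3_ent => e.
    by move: ne; rewrite -e eqxx.
  apply/killing_gt0P; exists (cj w3 u); first by apply: C_cj; [exact: w3_G | exact: u_in_C].
  split; first by apply: cjG => //; exact: w3_G.
  rewrite /cj w3_inv uE /Ut /w3 /yy !mulM3; apply: M3_eq; field: hw; rewrite ?hx ?h3 ?andbT //.
have : connect adj u yy := connect_trans cu1 (connect1 ad).
rewrite -ey -e2 -cjM // => pg.
have := PSM (SU3_invmx v2G) (SU3_mul v2G gG) pv2i pg.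
by rewrite mulmxA mulVmx ?SU3_unit // mul1mx.
Qed.

Hypothesis norm_surj : forall c : F, c ^+ q = c -> exists a, a * a ^+ q = c.

Lemma unit_ent (M : 'M[F]_3) : M \in G ->
  [/\ (M o2 o0)^+q * M o0 o0 + (M o1 o0)^+q * M o1 o0 + (M o0 o0)^+q * M o2 o0 = 0,
      (M o2 o0)^+q * M o0 o1 + (M o1 o0)^+q * M o1 o1 + (M o0 o0)^+q * M o2 o1 = 0 &
      (M o2 o0)^+q * M o0 o2 + (M o1 o0)^+q * M o1 o2 + (M o0 o0)^+q * M o2 o2 = 1].
Proof.
move/SU3P => [h _]; move: h; rewrite [M]M3E conjtrM3 JmxE !mulM3.
move=> /(congr1 (fun A : 'M[F]_3 => (A o0 o0, A o0 o1, A o0 o2))); rewrite !M3_ent.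
move=> [e1 e2 e3]; split.
- by rewrite -[RHS]e1; ring.
- by rewrite -[RHS]e2; ring.
- by rewrite -[RHS]e3; ring.
Qed.

Lemma upper_of (M : 'M[F]_3) : M \in G -> M o2 o0 = 0 ->
  [/\ M o1 o0 = 0, M o2 o1 = 0 & M o0 o0 != 0].
Proof.
move=> MG e20; have [e1 e2 e3] := unit_ent MG.
move: e1; rewrite e20 fr0 !mul0r mulr0 add0r addr0 => /eqP.
rewrite mulf_eq0 fr_eq0 orbb => /eqP e10.
move: e3; rewrite e20 e10 fr0 !mul0r !add0r => e3.
have n00 : M o0 o0 != 0.
  apply/negP => /eqP e0; move: e3; rewrite e0 fr0 mul0r => /eqP.
  by rewrite eq_sym oner_eq0.
split => //.
move: e2; rewrite e20 e10 fr0 !mul0r !add0r => /eqP.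
by rewrite mulf_eq0 fr_eq0 (negbTE n00) /= => /eqP.
Qed.

Lemma PS_U (M : 'M[F]_3) : M \in G -> M o2 o0 = 0 -> M o0 o0 = 1 -> PS M.
Proof.
move=> MG e20 e00; have [e10 e21 _] := upper_of MG e20.
have [_ _ e3] := unit_ent MG.
move: e3; rewrite e20 e10 e00 fr0 fr1 !mul0r !add0r mul1r => e22.
have e11 : M o1 o1 = 1.
  move/SU3P: MG => [_]; rewrite {1}[M]M3E detM3 e20 e10 e21 e00 e22 => d.
  by rewrite -[RHS]d; ring.
have -> : M = Ut (M o0 o1) (M o0 o2) (M o1 o2).
  by rewrite {1}[M]M3E /Ut e20 e10 e21 e00 e11 e22.
by apply: PS_Ut; rewrite -(_ : M = Ut _ _ _) // {1}[M]M3E /Ut e20 e10 e21 e00 e11 e22.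
Qed.

Lemma upper_mul (A B : 'M[F]_3) : A o1 o0 = 0 -> A o2 o0 = 0 -> A o2 o1 = 0 ->
  B o1 o0 = 0 -> B o2 o0 = 0 -> B o2 o1 = 0 ->
  (A *m B) o2 o0 = 0 /\ (A *m B) o0 o0 = A o0 o0 * B o0 o0.
Proof.
move=> a10 a20 a21 b10 b20 b21; rewrite [A]M3E [B]M3E mulM3 !M3_ent.
rewrite ?a10 ?a20 ?a21 ?b10 ?b20 ?b21; split; ring.
Qed.

Lemma inv_upper (M : 'M[F]_3) : M \in G -> M o2 o0 = 0 ->
  (invmx M) o2 o0 = 0 /\ (invmx M) o0 o0 * M o0 o0 = 1.
Proof.
move=> MG e20; have [e10 e21 _] := upper_of MG e20.
have i20 : (invmx M) o2 o0 = 0.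
  by rewrite (SU3_inv MG) JmxE {1}[M]M3E conjtrM3 !mulM3 !M3_ent e20 fr0; ring.
split => //.
have iG := SU3_invmx MG; have [i10 i21 _] := upper_of iG i20.
have [_ <-] := upper_mul i10 i20 i21 e10 e20 e21.
by rewrite mulVmx ?SU3_unit // oneM3 M3_ent.
Qed.

Lemma BR (h : 'M[F]_3) : h \in G -> h o2 o0 != 0 ->
  exists2 v, v \in G & [/\ PS v, PS (invmx v), (w3 *m v *m h) o2 o0 = 0 &
    exists a b c, v = Ut a b c].
Proof.
move=> hG n20; have [iso _ _] := unit_ent hG.
set h00 := h o0 o0 in iso *; set h10 := h o1 o0 in iso *; set h20 := h o2 o0 in iso n20 *.
pose a := (h10 / h20) ^+ q; pose b := - (h00 + a * h10) / h20.
have fn20 : h20 ^+ q != 0 by rewrite fr_eq0.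
have iso' : h20 ^+ q * h00 = - (h10 ^+ q * h10 + h00 ^+ q * h20).
  transitivity (h20 ^+ q * h00 + h10 ^+ q * h10 + h00 ^+ q * h20 - (h10 ^+ q * h10 + h00 ^+ q * h20)).
    by ring.
  by rewrite iso sub0r.
have vG : Ut a b (- a ^+ q) \in G.
  apply: Ut_G; rewrite /b /a !frE; field: iso'; rewrite ?n20 ?fn20 ?andbT //.
exists (Ut a b (- a ^+ q)) => //; split.
- exact: PS_Ut.
- rewrite Ut_inv; apply: PS_Ut; rewrite -Ut_inv; exact: SU3_invmx.
- rewrite /w3 {1}[h]M3E /Ut !mulM3 !M3_ent -/h00 -/h10 -/h20 /b; field; exact: n20.
- by do 3 eexists.
Qed.

Lemma br20 : br o2 o0 = 0. Proof. by rewrite /br M3_ent. Qed.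

Lemma PSinvmx (g : 'M[F]_3) : g \in G -> PS g -> PS (invmx g).
Proof. exact: PSV. Qed.

Lemma lower_PS (v : 'M[F]_3) : v \in G -> v o2 o0 = 0 -> v o0 o0 = 1 ->
  PS (w3 *m v *m w3).
Proof.
move=> vG v20 v00.
have bG := br_G; have gG : w3 *m br \in G by apply: SU3_mul; [exact: w3_G | exact: br_G].
have [i20 i00] := inv_upper bG br20.
have iG := SU3_invmx bG.
have [i10 i21 _] := upper_of iG i20; have [b10 b21 _] := upper_of bG br20.
have [v10 v21 _] := upper_of vG v20.
pose X := invmx br *m v *m br.
have XG : X \in G by rewrite /X !SU3_mul.
have [m20 m00] := upper_mul i10 i20 i21 v10 v20 v21.
have [m10 m21 _] := upper_of (SU3_mul iG vG) m20.
have [X20 X00] := upper_mul m10 m20 m21 b10 br20 b21.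
have PX : PS X by apply: PS_U => //; rewrite X00 m00 v00 mulr1.
have e : w3 *m v *m w3 = (w3 *m br) *m X *m invmx (w3 *m br).
  rewrite invmxM ?w3_G // w3_inv /X !mulmxA.
  rewrite -(mulmxA w3 br) mulmxV ?SU3_unit // mulmx1.
  by rewrite -(mulmxA _ br) mulmxV ?SU3_unit // mulmx1.
rewrite e; apply: PSM.
- exact: SU3_mul.
- exact: SU3_invmx.
- by apply: PSM => //; exact: crux.
- by apply: PSV => //; exact: crux.
Qed.

Lemma torus_PS (s : F) : s != 0 ->
  exists2 b, b \in G & [/\ b o2 o0 = 0, b o0 o0 = s & PS (w3 *m b)].
Proof.
move=> ns.
have [a ea] : exists a, a * a ^+ q = - (s + s ^+ q).
  by apply: norm_surj; rewrite !frE; ring.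
have vG : Ut a s (- a ^+ q) \in G by apply: Ut_G; rewrite ea; ring.
pose l := w3 *m Ut a s (- a ^+ q) *m w3.
have lG : l \in G by rewrite /l !SU3_mul ?w3_G.
have pl : PS l by apply: lower_PS => //; rewrite /Ut M3_ent.
have l20 : l o2 o0 = s by rewrite /l /w3 /Ut !mulM3 M3_ent; ring.
have n20 : l o2 o0 != 0 by rewrite l20.
clearbody l.
have [v v1G [pv _ e [a' [b' [c' ve]]]]] := BR lG n20.
exists (w3 *m v *m l); first by rewrite !SU3_mul ?w3_G.
split => //.
- rewrite -l20 [v]M3E [l]M3E /w3 !mulM3 !M3_ent.
  rewrite ve /Ut !M3_ent; ring.
- by rewrite !mulmxA w3w3 mul1mx; exact: (PSM v1G lG pv pl).
Qed.

Lemma B_PS (b : 'M[F]_3) : b \in G -> b o2 o0 = 0 -> PS b.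
Proof.
move=> bG b20.
have [b10 b21 nb] := upper_of bG b20.
have [r10 r21 nr] := upper_of br_G br20.
have [ir20 ir00] := inv_upper br_G br20.
have irG := SU3_invmx br_G.
have [ir10 ir21 _] := upper_of irG ir20.
have ns : br o0 o0 * b o0 o0 != 0 by rewrite mulf_neq0.
have [bs bsG [bs20 bs00 pbs]] := torus_PS ns.
have [bs10 bs21 _] := upper_of bsG bs20.
have gG : w3 *m br \in G by apply: SU3_mul; [exact: w3_G | exact: br_G].
pose X := invmx br *m bs.
have XG : X \in G by rewrite /X SU3_mul.
have eX : X = invmx (w3 *m br) *m (w3 *m bs).
  by rewrite invmxM ?w3_G ?br_G // w3_inv /X -mulmxA (mulmxA w3 w3) w3w3 mul1mx.
have PX : PS X.
  rewrite eX; apply: PSM => //.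
  - exact: SU3_invmx.
  - by apply: SU3_mul => //; exact: w3_G.
  - by apply: PSV => //; exact: crux.
have [X20 X00] := upper_mul ir10 ir20 ir21 bs10 bs20 bs21.
have X00' : X o0 o0 = b o0 o0.
  by rewrite X00 bs00 mulrA ir00 mul1r.
have [X10 X21 nX] := upper_of XG X20.
have [iX20 iX00] := inv_upper XG X20.
have iXG := SU3_invmx XG.
have [iX10 iX21 _] := upper_of iXG iX20.
pose Y := invmx X *m b.
have YG : Y \in G by rewrite /Y SU3_mul.
have [Y20 Y00] := upper_mul iX10 iX20 iX21 b10 b20 b21.
have PY : PS Y by apply: PS_U => //; rewrite Y00 -X00' iX00.
have -> : b = X *m Y by rewrite /Y mulmxA mulmxV ?SU3_unit // mul1mx.
exact: PSM.
Qed.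

Lemma w_PS : PS w3.
Proof.
have gG : w3 *m br \in G by apply: SU3_mul; [exact: w3_G | exact: br_G].
have irG := SU3_invmx br_G.
have [ir20 _] := inv_upper br_G br20.
have -> : w3 = (w3 *m br) *m invmx br by rewrite -mulmxA mulmxV ?SU3_unit ?br_G // mulmx1.
apply: PSM => //; first exact: crux.
exact: B_PS.
Qed.

Lemma all_PS (h : 'M[F]_3) : h \in G -> PS h.
Proof.
move=> hG; have [e20|n20] := eqVneq (h o2 o0) 0; first exact: B_PS.
have [v vG [pv pvi e _]] := BR hG n20.
have bG : w3 *m v *m h \in G by rewrite !SU3_mul ?w3_G.
have pb := B_PS bG e.
have -> : h = invmx v *m w3 *m (w3 *m v *m h).
  rewrite !mulmxA -(mulmxA _ w3 w3) w3w3 mulmx1 mulVmx ?SU3_unit // mul1mx //.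
apply: PSM.
- by apply: SU3_mul; [exact: SU3_invmx | exact: w3_G].
- exact: bG.
- by apply: PSM => //; [exact: SU3_invmx | exact: w3_G | exact: w_PS].
- exact: pb.
Qed.
End Frob.



Lemma norm_surj_lem (F : finFieldType) (q : nat) (xi : F) :
  (1 < q)%N -> #|F| = (q ^ 2)%N -> (q ^ 2 - 1).-primitive_root xi ->
  forall c : F, c ^+ q = c -> exists a, a * a ^+ q = c.
Proof.
move=> q1 cF pr c fc.
have [->|nc] := eqVneq c 0; first by exists 0; rewrite mul0r.
have c1 : c ^+ (q ^ 2 - 1) = 1.
  have qq : (0 < q ^ 2)%N by rewrite expn_gt0 ltnW.
  apply: (mulIf nc); rewrite mul1r -exprSr (_ : (q ^ 2 - 1).+1 = q ^ 2)%N; last by lia.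
  by rewrite -cF expf_card.
have [[i _] /= ci] := prim_rootP pr c1.
have xn : xi != 0.
  apply/negP => /eqP x0; move: (prim_expr_order pr); rewrite x0 expr0n.
  have -> : (q ^ 2 - 1 == 0)%N = false by apply/negbTE; rewrite subn_eq0 -ltnNge; nia.
  by move/eqP; rewrite eq_sym oner_eq0.
have d : (q ^ 2 - 1 %| i * (q - 1))%N.
  rewrite (prim_order_dvd pr); apply/eqP.
  apply: (mulIf (expf_neq0 i xn)); rewrite mul1r -exprD.
  have -> : (i * (q - 1) + i = i * q)%N by rewrite -{2}(muln1 i) -mulnDr subnK // ltnW.
  by rewrite exprM -ci fc.
have e2 : (q ^ 2 - 1 = (q + 1) * (q - 1))%N.
  have q0 : (0 < q)%N by apply: ltnW.
  by rewrite mulnBr muln1 mulnDl mul1n mulnn; lia.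
move: d; rewrite e2 dvdn_pmul2r ?subn_gt0 // => /dvdnP [j ej].
exists (xi ^+ j); rewrite -exprM -exprD ci ej.
by congr (_ ^+ _); rewrite mulnDr muln1 addnC mulnC.
Qed.

Lemma C3repE (F : finFieldType) (x alpha : F) :
  C3rep x alpha = M3 1 x alpha 0 1 (- x^-1) 0 0 1.
Proof. by apply/matrixP; elim/ord3P; elim/ord3P; rewrite !mxE. Qed.

Unset Implicit Arguments.

Theorem proposition4p12 (F : finFieldType) (q : nat) (xi alpha : F) (l : nat) :
  (exists p k : nat, [/\ prime p, (0 < k)%N & q = (p ^ k)%N]) ->
  q <> 2%N ->
  (q %% 3 = 2)%N ->
  #|F| = (q ^ 2)%N ->
  (q ^ 2 - 1).-primitive_root xi ->
  alpha != 0 -> alpha + alpha ^+ q + 1 = 0 ->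
  (l <= 2)%N ->
  killing_irreducible q (C3_0l q xi alpha l).
Proof.
move=> [p [k [pp k0 qE]]] q2 q3 cF pr a0 ea l2.
have q1 : (1 < q)%N by rewrite qE -(expn0 p) ltn_exp2l ?prime_gt1.
have q0 : (0 < q)%N by apply: ltnW.
have chp : p \in [char F].
  by apply: (card_finPcharP (n := (k * 2)%N)) => //; rewrite cF qE -expnM.
have q_char : [char F].-nat q.
  by rewrite qE pnatX (pnatE _ pp) chp.
set n := (q ^ 2 - 1)%N.
have n3 : (3 <= n)%N by rewrite /n; nia.
have xi1 : xi ^+ n = 1 := prim_expr_order pr.
have xin : xi != 0.
  by apply/negP => /eqP x0; move: xi1; rewrite x0 expr0n (_ : (n == 0)%N = false) //; [
    move/eqP; rewrite eq_sym oner_eq0 | apply/negbTE; rewrite -lt0n; lia].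
set x := xi ^+ (l * (q - 1)).
have hx : x != 0 by rewrite expf_neq0.
have frx : x ^+ q = x^-1.
  have e : x ^+ q * x = 1.
    rewrite /x -exprM -exprD (_ : (l * (q - 1) * q + l * (q - 1) = n * l)%N).
      by rewrite exprM xi1 expr1n.
    rewrite /n; have -> : (q ^ 2 = q * q)%N by rewrite mulnn.
    have [r ->] : exists r, q = r.+1 by exists q.-1; rewrite prednK.
    rewrite subn1 /=; nia.
  by rewrite -[LHS]mulr1 -(mulfV hx) mulrA e mul1r.
have fra : alpha ^+ q = - 1 - alpha.
  transitivity (alpha ^+ q - (alpha + alpha ^+ q + 1)); first by rewrite ea subr0.
  ring.
have d3 : (3 %| n)%N.
  have e : (n = (q + 1) * (q - 1))%N.
    by rewrite /n mulnBr muln1 mulnDl mul1n mulnn; lia.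
  rewrite e dvdn_mulr //.
  by rewrite /dvdn -modnDml q3.
set w0 := xi ^+ (n %/ 3).
have w3e : w0 ^+ 3 = 1 by rewrite /w0 -exprM divnK.
have w1 : w0 != 1.
  apply/negP => /eqP e.
  have : (n %| n %/ 3)%N by rewrite (prim_order_dvd pr) -/w0 e.
  move/dvdn_leq; rewrite divn_gt0 // => /(_ n3).
  by apply/negP; rewrite -ltnNge ltn_Pdiv //; lia.
have hw : w0 ^+ 2 = - 1 - w0.
  have : (w0 - 1) * (w0 ^+ 2 + w0 + 1) = 0.
    transitivity (w0 ^+ 3 - 1); first by ring.
    by rewrite w3e subrr.
  move/eqP; rewrite mulf_eq0 subr_eq0 (negbTE w1) /= => /eqP e.
  transitivity (w0 ^+ 2 - (w0 ^+ 2 + w0 + 1)); first by rewrite e subr0.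
  ring.
have frw : w0 ^+ q = w0 ^+ 2.
  by rewrite {1}(divn_eq q 3) q3 exprD (mulnC _ 3) exprM w3e expr1n mul1r.
have h3 : (3%:R : F) != 0.
  apply/negP => /eqP e3.
  have : (w0 - 1) ^+ 2 = 0.
    transitivity (w0 ^+ 2 + w0 + 1 - 3%:R * w0); first by ring.
    by rewrite e3 hw; ring.
  by move/eqP; rewrite expf_eq0 /= subr_eq0 (negbTE w1).
have uE : C3rep x alpha = Ut x alpha (- x^-1) by rewrite C3repE.
have uG : C3rep x alpha \in SU3 F q.
  have e : alpha + alpha ^+ q + x * x ^+ q = 0 by rewrite frx mulfV // ea.
  by move: (Ut_G q_char cF e); rewrite frx uE.
have ns := norm_surj_lem q1 cF pr.
apply: (PS_all_irr q_char) => g gG.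
exact: (all_PS q_char cF uG hx frx fra hw frw h3 uE ns gG).
Qed.
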